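(* Let $\hat{a}\in\mathbb{C}$, $\hat{a}\neq 0$, and $\hat{d}\in\mathbb{Z}$, $\hat{d}\geq 0$. Let $F_0,F_1$ be causal filters, not both zero, with $\gcd(F_0,F_1)=z^{-d_F}$ where $0\leq d_F\leq\hat{d}$, and let $M\in\mathbb{Z}$ satisfy $0\leq M\leq \hat{d}-d_F$. Suppose $(E_0,E_1)$ is a causal complement to $(F_0,F_1)$ for $\hat{a}z^{-\hat{d}}$, i.e. $F_0E_1-F_1E_0=\hat{a}z^{-\hat{d}}$. Define $\widetilde{F}_j(z)=z^{d_F}F_j(z)$, $j=0,1$ (which are causal), and let $\ell\in\{0,1\}$ be an index for which $\widetilde{F}_\ell$ is left-justified. Then there exists a unique causal filter $S(z)$ such that the pair $(R_0,R_1)=(E_0-S\widetilde{F}_0,\;E_1-S\widetilde{F}_1)$ is a causal complement to $(F_0,F_1)$ for $\hat{a}z^{-\hat{d}}$ that is degree-reducing modulo $M$ in $F_\ell$; moreover this $(R_0,R_1)$ is the unique causal complement to $(F_0,F_1)$ for $\hat{a}z^{-\hat{d}}$ that is degree-reducing modulo $M$ in $F_\ell$.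
   Context: A causal filter is a polynomial in $z^{-1}$ with complex coefficients; $\deg$ denotes degree in $z^{-1}$ ($\deg 0=-\infty$); gcd and divisibility are in $\mathbb{C}[z^{-1}]$ (up to nonzero constants). A causal filter $F$ is left-justified if $z^{-1}\nmid F$, i.e. its constant term $f(0)$ is nonzero. An ordered pair $(R_0,R_1)$ of causal filters is a causal complement to $(F_0,F_1)$ for inhomogeneity $\hat{a}z^{-\hat{d}}$ if $F_0R_1-F_1R_0=\hat{a}z^{-\hat{d}}$. It is degree-reducing modulo $M$ in $F_\ell$ ($\ell\in\{0,1\}$) if $z^{-M}$ divides both $R_0$ and $R_1$ and $\deg(R_\ell)<\deg(F_\ell)-\deg\gcd(F_0,F_1)+M$. *)

(* Defs.v *)
From HB Require Import structures.
From mathcomp Require Import all_boot all_order all_algebra.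
From mathcomp Require Import complex.
From mathcomp Require Import Rstruct.
Set Implicit Arguments. Unset Strict Implicit. Unset Printing Implicit Defensive.
Import Order.TTheory GRing.Theory Num.Theory.
Local Open Scope ring_scope.

Notation C := (Rdefinitions.R)[i].

(* A causal filter is a polynomial in z^{-1}; we represent it as an element
   of {poly C}, the indeterminate 'X standing for z^{-1}. *)
Notation causal_filter := {poly C}.

Definition left_justified (F : causal_filter) : Prop := ~~ ('X %| F).

Definition causal_complement (F0 F1 R0 R1 : causal_filter) (a : C) (d : nat) : Prop :=
  F0 * R1 - F1 * R0 = a%:P * 'X^d.

Definition sel (l : bool) (F0 F1 : causal_filter) := if l then F1 else F0.

(* (R0,R1) is degree-reducing modulo M in F_l:
   z^{-M} | R0, z^{-M} | R1, and deg R_l < deg F_l - deg gcd(F0,F1) + M,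
   where deg 0 = -oo (so the inequality holds when R_l = 0 and fails when
   R_l <> 0 and F_l = 0). *)
Definition degree_reducing (F0 F1 R0 R1 : causal_filter) (M : nat) (l : bool) : Prop :=
  ('X^M %| R0) /\ ('X^M %| R1) /\
  (sel l R0 R1 = 0 \/
   (sel l F0 F1 != 0 /\
    ((size (sel l R0 R1))%:Z - 1 <
     ((size (sel l F0 F1))%:Z - 1) - ((size (gcdp F0 F1))%:Z - 1) + M%:Z)%R)).

(* Main.v *)
Require Import Defs.
From HB Require Import structures.
From mathcomp Require Import all_boot all_order all_algebra.
From mathcomp Require Import complex Rstruct.
From mathcomp Require Import zify ring.
Import GRing.Theory Num.Theory.
Local Open Scope ring_scope.

Section Gen.
Variable K : fieldType.
Implicit Types P Q R S : {poly K}.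

Lemma coprimeXn P M : ~~ ('X %| P) -> coprimep ('X^M) P.
Proof.
move=> h; apply: coprimep_expl; rewrite coprimep_sym.
have := coprimep_XsubC P 0; have := dvdp_XsubCl P 0.
rewrite polyC0 subr0 => e ->; by rewrite -e.
Qed.

Lemma Xn_neq0 n : ('X^n : {poly K}) != 0.
Proof. by rewrite -size_poly_eq0 size_polyXn. Qed.

Lemma core_exists (P Qo Ep Eo : {poly K}) (c : K) (M k : nat) :
  ~~ ('X %| P) -> (M <= k)%N -> P * Eo - Qo * Ep = c%:P * 'X^k ->
  exists S, [/\ 'X^M %| Ep - S * P, 'X^M %| Eo - S * Qo &
               (size (Ep - S * P)%R < size P + M)%N].
Proof.
move=> hX hMk hrel.
have cop := coprimeXn P M hX.
have P0 : P != 0 by apply: contraNneq hX => ->; rewrite dvdp0.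
case/Bezout_eq1_coprimepP: cop => -[u1 u2] /= hu.
pose N := 'X^M * P.
pose Q := (Ep * u1 * 'X^M) %/ N.
exists (Ep * u2 + Q * 'X^M).
have e1 : Ep - (Ep * u2 + Q * 'X^M) * P = Ep * u1 * 'X^M - Q * N.
  rewrite /N -{1}(mulr1 Ep) -hu; ring.
have hdR : 'X^M %| Ep - (Ep * u2 + Q * 'X^M) * P.
  by rewrite e1 /N; apply: dvdp_add; [apply: dvdp_mull; apply: dvdpp |
    rewrite -mulNr mulrA; apply: dvdp_mulr; apply: dvdp_mull; apply: dvdpp].
split => //.
- have e2 : P * (Eo - (Ep * u2 + Q * 'X^M) * Qo) =
     c%:P * 'X^k + Qo * (Ep - (Ep * u2 + Q * 'X^M) * P).
    by rewrite -hrel; ring.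
  rewrite -(Gauss_dvdpr _ (coprimeXn P M hX)) e2.
  apply: dvdp_add; last exact: dvdp_mull.
  apply: dvdp_mull; exact: dvdp_exp2l.
- have e3 : Ep * u1 * 'X^M - Q * N = (Ep * u1 * 'X^M) %% N.
    by rewrite {1}(divp_eq (Ep * u1 * 'X^M) N) /Q addrAC subrr add0r.
  rewrite e1 e3.
  have N0 : N != 0 by rewrite mulf_neq0 // Xn_neq0.
  have := ltn_modpN0 (Ep * u1 * 'X^M) N0.
  by rewrite /N size_mul ?Xn_neq0 // size_polyXn addSn /= addnC.
Qed.

Lemma core_unique (P Ep S S' : {poly K}) (M : nat) :
  ~~ ('X %| P) ->
  'X^M %| Ep - S * P -> (size (Ep - S * P)%R < size P + M)%N ->
  'X^M %| Ep - S' * P -> (size (Ep - S' * P)%R < size P + M)%N -> S' = S.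
Proof.
move=> hX d1 s1 d2 s2.
have P0 : P != 0 by apply: contraNneq hX => ->; rewrite dvdp0.
have e : (S - S') * P = (Ep - S' * P) - (Ep - S * P) by ring.
have : 'X^M %| S - S'.
  by rewrite -(Gauss_dvdpl _ (coprimeXn P M hX)) e dvdp_sub.
case/dvdpP => T hT.
have [T0|T0] := eqVneq T 0.
  by move: hT; rewrite T0 mul0r => /eqP; rewrite subr_eq0 => /eqP.
exfalso.
have hs : (size ((S - S') * P)%R < size P + M)%N.
  rewrite e; apply: leq_ltn_trans (size_add _ _) _.
  by rewrite size_opp gtn_max s1 s2.
move: hs; rewrite hT size_mul ?mulf_neq0 ?Xn_neq0 // size_mul ?Xn_neq0 //.
rewrite size_polyXn.
have : size T != 0%N by rewrite size_poly_eq0.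
move: (size T) (size P) => t p; lia.
Qed.

Lemma param (P Qo x y : {poly K}) : coprimep P Qo -> P != 0 -> P * x = Qo * y ->
  exists S, y = S * P /\ x = S * Qo.
Proof.
move=> cop P0 h.
have : P %| y by rewrite -(Gauss_dvdpr _ cop) -h dvdp_mulr.
case/dvdpP => S hS; exists S; split => //.
apply: (mulfI P0); rewrite h hS; ring.
Qed.

Lemma degc (R P g : {poly K}) (dF M : nat) : P != 0 -> size g = dF.+1 ->
  (R = 0 \/ ('X^dF * P != 0 /\
     ((size R)%:Z - 1 < (size ('X^dF * P))%:Z - 1 - ((size g)%:Z - 1) + M%:Z)%R))
  <-> (size R < size P + M)%N.
Proof.
move=> P0 hg.
have E : ((size ('X^dF * P))%:Z - 1 - ((size g)%:Z - 1) + M%:Z)%R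
          = ((size P + M)%N%:Z - 1)%R.
  rewrite hg size_mul ?Xn_neq0 // size_polyXn addSn /= !PoszD intS; ring.
rewrite E ltrD2r ltz_nat.
have : size P != 0%N by rewrite size_poly_eq0.
move=> hP; split.
- case=> [->|[_ h]] //; rewrite size_poly0; lia.
- move=> h; right; split => //; by rewrite mulf_neq0 // Xn_neq0.
Qed.
End Gen.
Arguments core_exists {K P Qo Ep Eo c M k}.
Arguments core_unique {K P Ep S S' M}.
Arguments param {K P Qo x y}.
Arguments degc {K R P g dF M}.

Theorem theorem2p6 (a : C) (d : nat) (F0 F1 E0 E1 : causal_filter) (dF M : nat)
    (Ft0 Ft1 : causal_filter) (l : bool) :
  a != 0 ->
  ~ (F0 = 0 /\ F1 = 0) ->
  gcdp F0 F1 %= 'X^dF ->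
  (dF <= d)%N ->
  (M <= d - dF)%N ->
  causal_complement F0 F1 E0 E1 a d ->
  (* Ft_j = z^{dF} F_j, i.e. F_j = z^{-dF} Ft_j *)
  F0 = 'X^dF * Ft0 -> F1 = 'X^dF * Ft1 ->
  left_justified (sel l Ft0 Ft1) ->
  exists S : causal_filter,
    [/\ causal_complement F0 F1 (E0 - S * Ft0) (E1 - S * Ft1) a d /\
        degree_reducing F0 F1 (E0 - S * Ft0) (E1 - S * Ft1) M l,
      (forall S' : causal_filter,
          causal_complement F0 F1 (E0 - S' * Ft0) (E1 - S' * Ft1) a d /\
          degree_reducing F0 F1 (E0 - S' * Ft0) (E1 - S' * Ft1) M l ->
          S' = S) &
      (forall R0 R1 : causal_filter,
          causal_complement F0 F1 R0 R1 a d /\ degree_reducing F0 F1 R0 R1 M l ->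
          R0 = E0 - S * Ft0 /\ R1 = E1 - S * Ft1)].
Proof.
move=> a0 nz hg hdF hM hc eF0 eF1 hl.
have X0 := Xn_neq0 C dF.
have sg : size (gcdp F0 F1) = dF.+1 by rewrite (eqp_size hg) size_polyXn.
subst F0 F1.
have cop : coprimep Ft0 Ft1.
  have h1 : 'X^dF * gcdp Ft0 Ft1 %= gcdp ('X^dF * Ft0) ('X^dF * Ft1)
    by rewrite eqp_sym gcdp_mul2l.
  have := eqp_trans h1 hg.
  rewrite -{2}(mulr1 'X^dF) eqp_mul2l // => /eqp_size; rewrite size_poly1 => h.
  by rewrite /coprimep h.
have hr : Ft0 * E1 - Ft1 * E0 = a%:P * 'X^(d - dF).
  apply: (mulfI X0).
  have -> : 'X^dF * (a%:P * 'X^(d - dF)) = a%:P * 'X^d.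
    by rewrite -{2}(subnKC hdF) exprD; ring.
  by rewrite -hc /causal_complement; ring.
have hdiff : forall R0 R1, causal_complement ('X^dF * Ft0) ('X^dF * Ft1) R0 R1 a d ->
    Ft0 * (R1 - E1) = Ft1 * (R0 - E0).
  move=> R0 R1 cR; apply: (mulfI X0); apply/eqP; rewrite -subr_eq0; apply/eqP.
  have -> : 'X^dF * (Ft0 * (R1 - E1)) - 'X^dF * (Ft1 * (R0 - E0)) =
     ('X^dF * Ft0 * R1 - 'X^dF * Ft1 * R0) - ('X^dF * Ft0 * E1 - 'X^dF * Ft1 * E0)
    by ring.
  by move: cR hc; rewrite /causal_complement => -> ->; rewrite subrr.
have ccS : forall S, causal_complement ('X^dF * Ft0) ('X^dF * Ft1)
                       (E0 - S * Ft0) (E1 - S * Ft1) a d.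
  by move=> S; rewrite /causal_complement -hc; ring.
have P0 : sel l Ft0 Ft1 != 0.
  by apply: contraNneq hl => ->; rewrite /left_justified dvdp0.
case: l hl P0 => /= hl P0.
- have rel : Ft1 * E0 - Ft0 * E1 = (- a)%:P * 'X^(d - dF).
    by rewrite polyCN mulNr -hr; ring.
  have [S [d1 d2 s1]] := core_exists hl hM rel.
  have uS : forall S', 'X^M %| E1 - S' * Ft1 ->
      (size (E1 - S' * Ft1)%R < size Ft1 + M)%N -> S' = S.
    by move=> S' e s; apply: (core_unique hl d1 s1 e s).
  exists S; split.
  + split; first exact: ccS.
    split; first exact: d2.
    by split; [exact: d1 | apply/(degc P0 sg)].
  + move=> S' [_ [_ [e2 dc]]]; apply: uS e2 _.
    by apply/(degc P0 sg).
  + move=> R0 R1 [cR [e1 [e2 dc]]].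
    have hd := hdiff _ _ cR.
    have [T [hT1 hT0]] := param (etrans (coprimep_sym _ _) cop) P0 (esym hd).
    have eR1 : R1 = E1 - (- T) * Ft1 by rewrite mulNr opprK -hT1; ring.
    have eR0 : R0 = E0 - (- T) * Ft0 by rewrite mulNr opprK -hT0; ring.
    rewrite {1}eR0 {1}eR1; have -> : - T = S.
      apply: uS; rewrite -eR1 //.
      by apply/(degc P0 sg).
    by [].
- have [S [d1 d2 s1]] := core_exists hl hM hr.
  have uS : forall S', 'X^M %| E0 - S' * Ft0 ->
      (size (E0 - S' * Ft0)%R < size Ft0 + M)%N -> S' = S.
    by move=> S' e s; apply: (core_unique hl d1 s1 e s).
  exists S; split.
  + split; first exact: ccS.
    split; first exact: d1.
    by split; [exact: d2 | apply/(degc P0 sg)].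
  + move=> S' [_ [e1 [_ dc]]]; apply: uS e1 _.
    by apply/(degc P0 sg).
  + move=> R0 R1 [cR [e1 [e2 dc]]].
    have hd := hdiff _ _ cR.
    have [T [hT0 hT1]] := param cop P0 hd.
    have eR1 : R1 = E1 - (- T) * Ft1 by rewrite mulNr opprK -hT1; ring.
    have eR0 : R0 = E0 - (- T) * Ft0 by rewrite mulNr opprK -hT0; ring.
    rewrite {1}eR0 {1}eR1; have -> : - T = S.
      apply: uS; rewrite -eR0 //.
      by apply/(degc P0 sg).
    by [].
Qed.
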